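(* Let $\mathcal T$ be a text, let $\alpha$ be right-maximal in $\mathcal T$, and let $\mathtt{st\text{-}lex}[b,e]$ be the range containing the text positions $i\in\mathtt{st\text{-}lex}$ such that $\mathcal T[1,i]$ is suffixed by $\alpha$. Let $C=\{c\in\Sigma: \alpha\cdot c\text{ occurs in }\mathcal T\}$. Then: (a) for $c\in C\setminus\{\min C\}$, if $\mathcal T[j-|\alpha|+1,n]$ is the lexicographically smallest suffix prefixed by $\alpha\cdot c=\mathcal T[j-|\alpha|+1,j+1]$, then $j\in\mathtt{st\text{-}lex}[b,e]$; (b) for $c\in C\setminus\{\max C\}$, if $\mathcal T[j-|\alpha|+1,n]$ is the lexicographically largest suffix prefixed by $\alpha\cdot c=\mathcal T[j-|\alpha|+1,j+1]$, then $j\in\mathtt{st\text{-}lex}[b,e]$.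
   Context: A text is a string $\mathcal T\in\Sigma^n$ over an integer alphabet whose last symbol $\mathcal T[n]=\$$ occurs only there and is smallest. A substring $\alpha$ is right-maximal if it is a suffix of $\mathcal T$ or there exist distinct $a,b$ with $\alpha a$, $\alpha b$ substrings of $\mathcal T$. $\mathrm{ISA}[i]$ is the lexicographic rank of suffix $\mathcal T[i,n]$. For $i\ne j$, $\mathrm{rlce}(i,j)$ is the length of the longest common prefix of $\mathcal T[i,n]$ and $\mathcal T[j,n]$. For a permutation $\pi$, $\mathrm{LPF}_\pi[i]=0$ if $\pi(i)=1$, else $\mathrm{LPF}_\pi[i]=\max_{\pi(j)<\pi(i)}\mathrm{rlce}(j,i)$, and $\mathrm{PDA}_\pi=\{i+\mathrm{LPF}_\pi[i]:i\in[n]\}$. Let $\mathtt{st\text{-}lex}^-=\mathrm{PDA}_\pi$ for $\pi(i)=\mathrm{ISA}[i]$ and $\mathtt{st\text{-}lex}^+=\mathrm{PDA}_{\bar\pi}$ for $\bar\pi(i)=n-\mathrm{ISA}[i]+1$. The array $\mathtt{st\text{-}lex}$ lists the set $\{i-1: i\in\mathtt{st\text{-}lex}^-\cup\mathtt{st\text{-}lex}^+\cup\{n+1\}\}$ sorted colexicographically by the prefixes $\mathcal T[1,j]$ ($\mathcal T[1,0]$ being empty). *)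

(* Defs.v *)
(* Texts are sequences of naturals (integer alphabet).
   Text positions are 1-based as in the paper: T[i] = nth 0 T i.-1. *)
From mathcomp Require Import all_boot.
Set Implicit Arguments. Unset Strict Implicit. Unset Printing Implicit Defensive.

(* T is a text: nonempty, last symbol ($) strictly smaller than every other
   symbol (hence occurs only there and is smallest). *)
Definition is_text (T : seq nat) : bool :=
  (0 < size T) &&
  all (fun i => nth 0 T (size T).-1 < nth 0 T i) (iota 0 (size T).-1).

Fixpoint lex_lt (s t : seq nat) : bool :=
  match s, t with
  | [::], _ :: _ => true
  | _, [::] => false
  | x :: s', y :: t' => (x < y) || ((x == y) && lex_lt s' t')
  end.

Fixpoint lcp (s t : seq nat) : nat :=
  match s, t with
  | x :: s', y :: t' => if x == y then (lcp s' t').+1 else 0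
  | _, _ => 0
  end.

Definition suf (T : seq nat) (i : nat) : seq nat := drop i.-1 T.

Definition ISA (T : seq nat) (i : nat) : nat :=
  (count (fun j => lex_lt (suf T j) (suf T i)) (iota 1 (size T))).+1.

Definition rlce (T : seq nat) (i j : nat) : nat := lcp (suf T i) (suf T j).

Definition LPF (T : seq nat) (pi : nat -> nat) (i : nat) : nat :=
  if pi i == 1 then 0
  else \max_(j <- iota 1 (size T) | pi j < pi i) rlce T j i.

Definition PDA (T : seq nat) (pi : nat -> nat) (p : nat) : bool :=
  has (fun i => p == i + LPF T pi i) (iota 1 (size T)).

Definition stlex_minus (T : seq nat) : nat -> bool := PDA T (ISA T).
Definition stlex_plus (T : seq nat) : nat -> bool :=
  PDA T (fun i => size T - ISA T i + 1).

(* membership in the set underlying the array st-lex: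
   { i-1 : i in st-lex^- U st-lex^+ U {n+1} } *)
Definition in_stlex (T : seq nat) (p : nat) : bool :=
  [|| stlex_minus T p.+1, stlex_plus T p.+1 | p.+1 == (size T).+1].

(* the range st-lex[b,e]: entries i of st-lex such that T[1,i] is suffixed
   by alpha (these are contiguous in the colexicographic order) *)
Definition stlex_range (T alpha : seq nat) (p : nat) : bool :=
  in_stlex T p && suffix alpha (take p T).

Definition right_maximal (T alpha : seq nat) : Prop :=
  suffix alpha T \/
  exists a b, a <> b /\ infix (rcons alpha a) T /\ infix (rcons alpha b) T.

Definition inC (T alpha : seq nat) (c : nat) : bool := infix (rcons alpha c) T.

(* Main.v *)
Require Import Defs.
From mathcomp Require Import all_boot.
From mathcomp Require Import zify.
Set Implicit Arguments. Unset Strict Implicit.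

Lemma lex_irr s : ~~ lex_lt s s.
Proof. elim: s => //= x s IH; by rewrite ltnn eqxx IH. Qed.

Lemma lex_trans s t u : lex_lt s t -> lex_lt t u -> lex_lt s u.
Proof.
elim: s t u => [|x s IH] [|y t] [|z u] //=.
case/orP=> [H1|/andP[/eqP-> H1]]; case/orP=> [H2|/andP[/eqP<- H2]].
- by rewrite (ltn_trans H1 H2).
- by rewrite H1.
- by rewrite H2.
- by rewrite eqxx (IH _ _ H1 H2) orbT.
Qed.

Lemma lcp_split a x y s t : x != y -> lcp (a ++ x :: s) (a ++ y :: t) = size a.
Proof. move=> Hxy; elim: a => [|z a IH] /=; first by rewrite (negbTE Hxy). by rewrite eqxx IH. Qed.

Lemma lex_split a x y s t : x < y -> lex_lt (a ++ x :: s) (a ++ y :: t).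
Proof. move=> Hxy; elim: a => [|z a IH] /=; first by rewrite Hxy. by rewrite eqxx IH orbT. Qed.

Lemma lcp_take m s t : m <= lcp s t -> take m s = take m t.
Proof.
elim: s t m => [|x s IH] [|y t] [|m] //=.
case: eqP => // -> H; by rewrite (IH t m H).
Qed.

Lemma ISA_lt T a b : a \in iota 1 (size T) -> lex_lt (suf T a) (suf T b) -> ISA T a < ISA T b.
Proof.
move=> Ha Hab; rewrite /ISA ltnS.
set P := fun j => lex_lt (suf T j) (suf T a).
set Q := fun j => lex_lt (suf T j) (suf T b).
have H1 : count (predU P (pred1 a)) (iota 1 (size T)) <= count Q (iota 1 (size T)).
  apply: sub_count => x /orP[Hx|/eqP->] //; exact: lex_trans Hx Hab.
have H2 : count (predI P (pred1 a)) (iota 1 (size T)) = 0.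
  apply/eqP; rewrite -leqn0 leqNgt -has_count; apply/hasP => -[x _ /andP[Hx /eqP E]].
  by move: Hx; rewrite /P E (negbTE (lex_irr _)).
have H3 := count_predUI P (pred1 a) (iota 1 (size T)).
have H4 : count (pred1 a) (iota 1 (size T)) = 1.
  by rewrite (count_uniq_mem _ (iota_uniq _ _)) Ha.
rewrite H2 H4 addn0 in H3; by rewrite H3 addn1 in H1.
Qed.

Lemma ISA_le T a : a \in iota 1 (size T) -> ISA T a <= size T.
Proof.
move=> Ha; rewrite /ISA.
set P := fun j => lex_lt (suf T j) (suf T a).
have := count_predC P (iota 1 (size T)); rewrite size_iota.
have : 0 < count (predC P) (iota 1 (size T)).
  rewrite -has_count; apply/hasP; exists a => //; by rewrite /= /P lex_irr.
lia.
Qed.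

Lemma ISA_ge1 T a : 1 <= ISA T a.
Proof. by []. Qed.

Lemma LPF_eq T pi i m :
  (exists2 k, k \in iota 1 (size T) & (0 < pi k < pi i) && (rlce T k i == m)) ->
  (forall j, j \in iota 1 (size T) -> pi j < pi i -> rlce T j i <= m) ->
  LPF T pi i = m.
Proof.
move=> [k Hk /andP[/andP[Hk0 Hki] /eqP Hr]] Hall.
rewrite /LPF ifN; last by apply/eqP=> E; move: Hki; rewrite E; lia.
apply/eqP; rewrite eqn_leq; apply/andP; split.
  by apply/bigmax_leqP_seq.
rewrite -Hr; exact: leq_bigmax_seq.
Qed.

Lemma suf_decomp T alpha c j :
  take (size alpha).+1 (suf T (j - size alpha + 1)) = rcons alpha c ->
  exists rest, suf T (j - size alpha + 1) = alpha ++ c :: rest.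
Proof.
move=> H; exists (drop (size alpha).+1 (suf T (j - size alpha + 1))).
by rewrite -{1}(cat_take_drop (size alpha).+1 (suf T _)) H cat_rcons.
Qed.

Lemma inC_pos T alpha c : inC T alpha c ->
  exists2 k, k \in iota 1 (size T) & exists rest, suf T k = alpha ++ c :: rest.
Proof.
case/infixP=> s [s' E]; exists (size s).+1.
  rewrite mem_iota E !size_cat size_rcons; move: (size s) (size alpha) (size s') => x y z; lia.
exists s'; by rewrite /suf /= E drop_size_cat // cat_rcons.
Qed.

Lemma suffix_part T alpha c j : size alpha <= j ->
  take (size alpha).+1 (suf T (j - size alpha + 1)) = rcons alpha c ->
  suffix alpha (take j T).
Proof.
move=> Hmj H; have [rest E] := suf_decomp H.
have -> : j = (j - size alpha) + size alpha by lia.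
rewrite takeD.
have -> : drop (j - size alpha) T = suf T (j - size alpha + 1) by rewrite /suf addn1.
rewrite E take_size_cat //; exact: suffix_suffix.
Qed.

Lemma prefix_of T alpha c j j' :
  take (size alpha).+1 (suf T j) = rcons alpha c ->
  (size alpha).+1 <= rlce T j' j -> prefix (rcons alpha c) (suf T j').
Proof.
move=> H1 H2; rewrite prefixE size_rcons (lcp_take H2) H1 //.
Qed.

Theorem corollary26 (T alpha : seq nat) :
  is_text T -> right_maximal T alpha ->
  (* (a) *)
  (forall (c j : nat),
     inC T alpha c -> (exists c', inC T alpha c' /\ c' < c) ->
     size alpha <= j -> j.+1 <= size T ->
     take (size alpha).+1 (suf T (j - size alpha + 1)) = rcons alpha c ->
     (forall k, 1 <= k <= size T ->
        prefix (rcons alpha c) (suf T k) ->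
        suf T (j - size alpha + 1) = suf T k \/
        lex_lt (suf T (j - size alpha + 1)) (suf T k)) ->
     stlex_range T alpha j) /\
  (* (b) *)
  (forall (c j : nat),
     inC T alpha c -> (exists c', inC T alpha c' /\ c < c') ->
     size alpha <= j -> j.+1 <= size T ->
     take (size alpha).+1 (suf T (j - size alpha + 1)) = rcons alpha c ->
     (forall k, 1 <= k <= size T ->
        prefix (rcons alpha c) (suf T k) ->
        suf T (j - size alpha + 1) = suf T k \/
        lex_lt (suf T k) (suf T (j - size alpha + 1))) ->
     stlex_range T alpha j).
Proof.
move=> _ _; split.
- move=> c j _ [c' [HC' Hc']] Hmj Hjn Htake Hmin.
  have [rest Hsi] := suf_decomp Htake.
  have [k Hk [rest' Hsk]] := inC_pos HC'.
  set i := j - size alpha + 1 in Htake Hmin Hsi.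
  have Hi : i \in iota 1 (size T) by rewrite mem_iota /i; lia.
  rewrite /stlex_range (suffix_part Hmj Htake) andbT.
  apply/orP; left; apply/hasP; exists i => //.
  rewrite (@LPF_eq _ _ _ (size alpha)); first by apply/eqP; rewrite /i; lia.
    have Hne : c' != c by rewrite neq_ltn Hc'.
    exists k => //; rewrite ISA_lt //; last by rewrite Hsk Hsi lex_split.
    by rewrite /rlce Hsk Hsi (lcp_split _ _ _ Hne) eqxx.
  move=> j' Hj' Hlt; rewrite leqNgt; apply/negP=> H.
  have Hp := prefix_of Htake H.
  move: Hj'; rewrite mem_iota => /andP[Hj1 Hj2].
  case: (Hmin j' ltac:(lia) Hp) => [E|L].
    by move: Hlt; rewrite /ISA E ltnn.
  have := ISA_lt Hi L; lia.
- move=> c j _ [c' [HC' Hc']] Hmj Hjn Htake Hmin.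
  have [rest Hsi] := suf_decomp Htake.
  have [k Hk [rest' Hsk]] := inC_pos HC'.
  set i := j - size alpha + 1 in Htake Hmin Hsi.
  have Hi : i \in iota 1 (size T) by rewrite mem_iota /i; lia.
  rewrite /stlex_range (suffix_part Hmj Htake) andbT.
  apply/orP; right; apply/orP; left; apply/hasP; exists i => //.
  rewrite (@LPF_eq _ _ _ (size alpha)); first by apply/eqP; rewrite /i; lia.
    exists k => //.
    have := ISA_lt Hi (_ : lex_lt (suf T i) (suf T k)).
    rewrite Hsk Hsi lex_split // => /(_ isT) Hlt.
    have := ISA_le Hk; have := ISA_le Hi.
    have Hne : c' != c by rewrite neq_ltn Hc' orbT.
    rewrite /rlce Hsk Hsi (lcp_split _ _ _ Hne) eqxx andbT; lia.
  move=> j' Hj' Hlt; rewrite leqNgt; apply/negP=> H.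
  have Hp := prefix_of Htake H.
  have := ISA_le Hj'; have := ISA_le Hi.
  move: Hj'; rewrite mem_iota => /andP[Hj1 Hj2].
  case: (Hmin j' ltac:(lia) Hp) => [E|L].
    by move: Hlt; rewrite /ISA E ltnn.
  have := ISA_lt (_ : j' \in iota 1 (size T)) L.
  rewrite mem_iota Hj1 Hj2 => /(_ isT); lia.
Qed.
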